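(* Consider the universal Dealer $\mathcal D_{\mathrm{universal}}$ with parameters $k_i$, $\ell_i$, $u_i$, $d$ as below. For every epoch $i\in[d]$, the expected number of correct guesses that any Guesser makes during the $i$-th epoch is at most $\ln(\log n+3)$.
   Context: Card guessing game: a deck of $n$ distinct cards labeled $1,\dots,n$; $n$ turns; in each turn the Dealer selects a card from the remaining deck and places it face down, the Guesser names a card of $[n]$, and the card is revealed and discarded. A guess is correct if it equals the drawn card. The Guesser may be arbitrary (any memory, randomness and computation). The universal Dealer (rounding ignored): let $d=\log_{\log n}\big(n/(8e\log^6 n)\big)$, and for $i\in[d]$ let $k_i=n/(8e\log^{1+i} n)$, $\ell_i=k_i(1-1/\log n)$, $u_i=2\ell_i/\log^2 n$. (1) While more than $k_1$ cards remain it draws uniformly random cards from the remaining deck; (2) the $i$-th epoch consists of the $\ell_i$ turns starting when $k_i$ cards remain; at the start of each epoch a set $B$ is set to $\emptyset$; in each turn of the epoch the Dealer draws a uniformly random card of (remaining deck)$\setminus B$, and after the Guesser's guess $g$, if $g$ is still in the remaining deck and $|B|<u_i$, then $g$ is added to $B$; (3) when $\log^4 n$ cards remain it draws uniformly random cards from the remaining deck until the end. Expectations are over the randomness of both players. $\log$ is base 2, $\ln$ natural. *)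

(* Defs.v *)
From HB Require Import structures.
From mathcomp Require Import all_boot all_order all_algebra.
From mathcomp Require Import all_classical all_reals all_analysis.
Set Implicit Arguments. Unset Strict Implicit. Unset Printing Implicit Defensive.
Import Order.TTheory GRing.Theory Num.Theory.
Local Open Scope ring_scope.

Section UniversalDealer.
Variable R : realType.
Variable n : nat.

Definition lg : R := ln (n%:R : R) / ln 2.
Definition eR : R := expR 1.

Definition d_real : R := ln ((n%:R : R) / (8 * eR * lg ^+ 6)) / ln lg.
Definition k_real (i : nat) : R := (n%:R : R) / (8 * eR * lg ^+ (1 + i)).
Definition l_real (i : nat) : R := k_real i * (1 - lg^-1).
Definition u_real (i : nat) : R := 2 * l_real i / lg ^+ 2.

(* integer versions: rounding = floor (truncation of nonneg reals) *)
Definition dN : nat := Num.truncn d_real.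
Definition kN (i : nat) : nat := Num.truncn (k_real i).
Definition lN (i : nat) : nat := Num.truncn (l_real i).
Definition uN (i : nat) : nat := Num.truncn (u_real i).

(* r cards remaining at the start of a turn: the turn belongs to epoch j
   iff it is one of the l_j turns starting when k_j cards remain *)
Definition in_epoch (r j : nat) : bool :=
  [&& (1 <= j)%N, (j <= dN)%N, (kN j - lN j < r)%N & (r <= kN j)%N].

Definition epoch_at (r : nat) : option nat :=
  ohead [seq j <- iota 1 dN | in_epoch r j].

(* A (behavioural, hence arbitrary randomized with full memory) Guesser:
   given the history of (guess, revealed card) pairs, a probability
   distribution over the guess in [n]. *)
Definition guesser := seq ('I_n * 'I_n) -> 'I_n -> R.

Definition is_guesser (G : guesser) : Prop :=
  (forall h g, 0 <= G h g) /\ (forall h, \sum_(g : 'I_n) G h g = 1).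

(* Expected number of correct guesses made during epoch i, in the
   remaining [fuel] turns, from state (deck, B, history h), when the
   universal Dealer plays against G.  Outside of epochs (phases (1), (3))
   the dealer draws uniformly from the remaining deck. *)
Fixpoint play (G : guesser) (i fuel : nat) (deck B : {set 'I_n})
    (h : seq ('I_n * 'I_n)) : R :=
  match fuel with
  | 0 => 0
  | f.+1 =>
    let r := #|deck| in
    let ep := epoch_at r in
    let B0 := if ep is Some j then (if r == kN j then (finset.set0 : {set 'I_n}) else B) else (finset.set0 : {set 'I_n}) in
    let S := deck :\: B0 in
    \sum_(c in S) \sum_(g : 'I_n)
      ((#|S|%:R)^-1 * G h g) *
      ((if (ep == Some i) && (g == c) then 1 else 0) +
       play G i f (deck :\ c)
         (if ep is Some j then
            (if (g \in deck :\ c) && (#|B0| < uN j)%N then g |: B0 else B0)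
          else (finset.set0 : {set 'I_n}))
         (rcons h (g, c)))
  end.

Definition expected_correct_in_epoch (G : guesser) (i : nat) : R :=
  play G i n [set: 'I_n] (finset.set0 : {set 'I_n}) [::].

End UniversalDealer.

(* Main.v *)
Require Import Defs.
From HB Require Import structures.
From mathcomp Require Import all_boot all_order all_algebra.
From mathcomp Require Import all_classical all_reals all_analysis.
From mathcomp Require Import ring lra zify.
Import Order.TTheory GRing.Theory Num.Theory.
Local Open Scope ring_scope.

Lemma ln_nat_le (R : realType) (a b : nat) : (0 < a)%N -> (a <= b)%N ->
  ln (a%:R : R) <= ln (b%:R).
Proof.
move=> a0 ab; rewrite ler_ln ?posrE ?ltr0n ?ler_nat //.
exact: leq_trans ab.
Qed.

Lemma harm (R : realType) (m : nat) : (1 < m)%N ->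
  (m%:R : R)^-1 + ln ((m.-1)%:R) <= ln (m%:R).
Proof.
move=> m1.
have m0 : (0 < m%:R :> R) by rewrite ltr0n; exact: ltn_trans m1.
have m10 : (0 < (m.-1)%:R :> R) by rewrite ltr0n -ltnS prednK // ltnW.
suff H : ln ((m.-1)%:R / m%:R) <= - (m%:R : R)^-1.
  by move: H; rewrite ln_div ?posrE //; lra.
have -> : (m.-1)%:R / m%:R = 1 + (- (m%:R : R)^-1).
  rewrite -subn1 natrB ?(ltnW m1) // mulrBl mulfV ?gt_eqF // mul1r.
  by rewrite addrC.
apply: le_ln1Dx; rewrite ltrNl opprK invf_lt1 // ltr1n //.
Qed.

Definition Phi0 (R : realType) (K L U r : nat) : R :=
  ln ((minn (maxn r (K - L)) K - U)%:R) - ln ((K - L - U)%:R).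

Lemma Phi0_ge0 (R : realType) K L U r : (U < K - L)%N -> 0 <= Phi0 R K L U r.
Proof.
move=> h; rewrite /Phi0 subr_ge0 ln_nat_le ?subn_gt0 //.
apply: leq_sub2r; rewrite leq_min leq_maxr leq_subr //.
Qed.

Lemma Phi0_mono (R : realType) K L U r : (U < K - L)%N ->
  Phi0 R K L U r.-1 <= Phi0 R K L U r.
Proof.
move=> h; rewrite /Phi0 lerD2r ln_nat_le //.
  rewrite subn_gt0; apply: (leq_trans h); rewrite leq_min leq_maxr leq_subr //.
lia.
Qed.

Lemma Phi0_step (R : realType) K L U r : (U < K - L)%N ->
  (K - L < r <= K)%N ->
  ((r - U)%:R)^-1 + Phi0 R K L U r.-1 <= Phi0 R K L U r.
Proof.
move=> h /andP[r1 r2].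
have e1 : minn (maxn r (K - L)) K = r.
  by rewrite (maxn_idPl (ltnW r1)) (minn_idPl r2).
have e2 : minn (maxn r.-1 (K - L)) K = r.-1.
  rewrite (maxn_idPl _); last by rewrite -ltnS prednK // (leq_ltn_trans _ r1).
  by rewrite (minn_idPl _) // (leq_trans (leq_pred _) r2).
rewrite /Phi0 e1 e2 addrA lerD2r.
have -> : (r.-1 - U = (r - U).-1)%N.
  by rewrite -!subn1 subnAC.
apply: harm.
by rewrite ltn_subRL addn1 (leq_ltn_trans h r1).
Qed.

Lemma Phi0_le (R : realType) K L U r : (U < K - L)%N ->
  Phi0 R K L U r <= ln ((K - U)%:R) - ln ((K - L - U)%:R).
Proof.
move=> h; rewrite /Phi0 lerD2r ln_nat_le //.
  rewrite subn_gt0; apply: (leq_trans h); rewrite leq_min leq_maxr leq_subr //.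
by apply: leq_sub2r; rewrite geq_minr.
Qed.
Lemma step_le (R : realType) (n : nat) (S : {set 'I_n}) (p : 'I_n -> R) (t : bool)
  (P : 'I_n -> 'I_n -> R) (b : R) :
  (forall g, 0 <= p g) -> \sum_g p g = 1 -> 0 <= b ->
  (forall c g, c \in S -> P c g <= b) ->
  \sum_(c in S) \sum_g (#|S|%:R^-1 * p g) * ((if t && (g == c) then 1 else 0) + P c g)
  <= (if t then #|S|%:R^-1 else 0) + b.
Proof.
move=> p0 p1 b0 Pb.
have [S0|Sn0] := eqVneq #|S| 0%N.
  by rewrite (cards0_eq S0) big_set0 cards0 invr0 if_same add0r.
have Sp : (0 < #|S|%:R :> R) by rewrite ltr0n lt0n.
have w0 : forall g, 0 <= #|S|%:R^-1 * p g by move=> g; rewrite mulr_ge0 ?invr_ge0 ?ler0n ?p0.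
apply: (@le_trans _ _ (\sum_(c in S) \sum_g (#|S|%:R^-1 * p g) *
    ((if t && (g == c) then 1 else 0) + b))).
  apply: ler_sum => c cS; apply: ler_sum => g _.
  by apply: ler_wpM2l => //; rewrite lerD2l Pb.
under eq_bigr do rewrite (eq_bigr _ (fun g _ => mulrDr _ _ _)) big_split /=.
rewrite big_split /= lerD //.
  case: t.
    under eq_bigr => c _.
      rewrite (bigD1 c) //= eqxx mulr1 big1 ?addr0; last first.
        by move=> g /negbTE ->; rewrite mulr0.
      over.
    rewrite -mulr_sumr -[X in _ <= X]mulr1 ler_wpM2l ?invr_ge0 ?ler0n //.
    rewrite -p1 [X in _ <= X](bigID (fun c => c \in S)) /= lerDl.
    by apply: sumr_ge0 => c _.
  by rewrite big1 // => c _; rewrite big1 // => g _; rewrite mulr0.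
under eq_bigr do rewrite -mulr_suml -mulr_sumr p1 mulr1.
rewrite sumr_const -[_ *+ #|S|]mulr_natl mulrA mulfV ?mul1r //.
by rewrite gt_eqF.
Qed.

Lemma epoch_at_in (R : realType) n r j : epoch_at R n r = Some j -> in_epoch R n r j.
Proof.
rewrite /epoch_at.
case E: [seq j <- iota 1 (dN R n) | in_epoch R n r j] => [|x s] //= [<-].
have : x \in [seq j <- iota 1 (dN R n) | in_epoch R n r j] by rewrite E mem_head.
by rewrite mem_filter => /andP[].
Qed.

Lemma play_bound (R : realType) (n : nat) (G : guesser R n)
  (HG : is_guesser G) (i : nat) (Hi : (1 <= i <= dN R n)%N)
  (Hdisj : forall r, in_epoch R n r i -> epoch_at R n r = Some i)
  (HKLU : (uN R n i < kN R n i - lN R n i)%N) :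
  forall f (deck B : {set 'I_n}) h,
  ((kN R n i - lN R n i < #|deck| < kN R n i)%N -> (#|B| <= uN R n i)%N) ->
  play G i f deck B h <= Phi0 R (kN R n i) (lN R n i) (uN R n i) #|deck|.
Proof.
case: HG => p0 p1.
elim=> [|f IH] deck B h Inv; first exact: Phi0_ge0.
cbn [play].
set r := #|deck| in Inv *.
have rec : forall (c g : 'I_n) (B' : {set 'I_n}), c \in deck -> 
   ((kN R n i - lN R n i < r.-1 < kN R n i)%N -> (#|B'| <= uN R n i)%N) ->
   play G i f (deck :\ c) B' (rcons h (g, c)) <= Phi0 R (kN R n i) (lN R n i) (uN R n i) r.-1.
  move=> c g B' cd Inv'.
  have e : #|deck :\ c| = r.-1 by rewrite /r (cardsD1 c deck) cd.
  by rewrite -e; apply: IH; rewrite e.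
case E: (epoch_at R n r) => [j|].
  set B0 := (if r == kN R n j then finset.set0 else B).
  have -> : (Some j == Some i) = (j == i) by [].
  pose P := fun c g : 'I_n => play G i f (deck :\ c)
     (if (g \in deck :\ c) && (#|B0| < uN R n j)%N then g |: B0 else B0) (rcons h (g, c)).
  apply: le_trans.
    apply: (@step_le R n (deck :\: B0) (G h) (j == i) P (Phi0 R (kN R n i) (lN R n i) (uN R n i) r.-1)
       (p0 h) (p1 h) (@Phi0_ge0 R _ _ _ r.-1 HKLU)).
    move=> c g; rewrite finset.in_setD => /andP[_ cd]; apply: rec => // /andP[r1 r2].
    rewrite -!subn1 in r1 r2.
    have ie : in_epoch R n r i.
      case/andP: (Hi) => i1 i2; apply/and4P; split => //; lia.
    move: E; rewrite (Hdisj _ ie) => -[ji]; subst j.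
    have B0U : (#|B0| <= uN R n i)%N.
      rewrite /B0; case: eqP => [_|rK]; first by rewrite cards0.
      apply: Inv; apply/andP; split; lia.
    case: ifP => [/andP[_ hlt]|_] //.
    by rewrite cardsU1; move: hlt; case: (g \in B0) => /=; lia.
  case: eqP => [ji|_]; last by rewrite add0r Phi0_mono.
  subst j.
  have /and4P[_ _ r1 r2] := epoch_at_in _ _ _ _ E.
  have B0U : (#|B0| <= uN R n i)%N.
    rewrite /B0; case: eqP => [_|rK]; first by rewrite cards0.
    apply: Inv; apply/andP; split; lia.
  have hS : (r - uN R n i <= #|deck :\: B0|)%N.
    rewrite cardsD; have := subset_leq_card (subsetIr deck B0); rewrite -/r; lia.
  apply: (le_trans _ (@Phi0_step R _ _ _ r HKLU _)); last by rewrite r1 r2.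
  rewrite lerD2r lef_pV2 ?posrE ?ltr0n ?ler_nat //; lia.
have -> : (None == Some i) = false by [].
apply: le_trans.
  apply: (@step_le R n (deck :\: finset.set0) (G h) false
     (fun c g => play G i f (deck :\ c) finset.set0 (rcons h (g, c)))
     (Phi0 R (kN R n i) (lN R n i) (uN R n i) r.-1)
     (p0 h) (p1 h) (@Phi0_ge0 R _ _ _ r.-1 HKLU)).
  move=> c g; rewrite finset.in_setD => /andP[_ cd]; apply: rec => // _.
  by rewrite cards0.
by rewrite add0r Phi0_mono.
Qed.
Lemma eR_ge2 (R : realType) : 2 <= eR R.
Proof. by have := expR_ge1Dx (1 : R); rewrite /eR. Qed.

Lemma lg_ge_nat (R : realType) (n c : nat) : (2 ^ c <= n)%N -> (c%:R : R) <= lg R n.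
Proof.
move=> h.
have l2 : (0 : R) < ln 2 by apply: ln_gt0; rewrite ltr1n.
rewrite /lg ler_pdivlMr // -[X in _ <= X]mulr1.
have -> : (c%:R : R) * ln 2 = ln ((2 : R) ^+ c) by rewrite lnXn // mulr_natl.
rewrite mulr1 ler_ln ?posrE ?exprn_gt0 //; last first.
  by rewrite ltr0n; apply: leq_trans h; rewrite expn_gt0.
by rewrite -natrX ler_nat.
Qed.

Lemma arith (R : realType) (la k : R) : 7 <= la -> la ^+ 5 <= k ->
  let l := k * (1 - la^-1) in let u := 2 * l / la ^+ 2 in
  u + l + 1 <= k /\ k <= (la + 3) * (k - 1 - l - u).
Proof.
move=> l7 k5 l u.
have la0 : la != 0 by apply/eqP => h; move: l7; rewrite h; lra.
pose c := k / la ^+ 3.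
have kc : k = c * la ^+ 3 by rewrite /c divfK // expf_neq0.
have c2 : la ^+ 2 <= c.
  rewrite /c ler_pdivlMr ?exprn_gt0 -?exprD //; last lra.
have le : l = c * la ^+ 3 - c * la ^+ 2 by rewrite /l kc; field.
have ue : u = 2 * c * la - 2 * c by rewrite /u le; field.
rewrite ue le kc.
have c1 : 49 <= c by apply: le_trans c2; nra.
clearbody c l u.
have h1 : 0 <= c * (la * (la - 2)) by rewrite mulr_ge0 ?mulr_ge0 //; lra.
have h2 : 0 <= (c - 1) * (la * (la - 4) + 6) by rewrite mulr_ge0 //; nra.
have h3 : 0 <= la * (la - 5) by rewrite mulr_ge0; lra.
split; rewrite !exprS expr0 !mulr1; nra.
Qed.

Lemma params (R : realType) (n i : nat) : (1 <= i <= dN R n)%N ->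
  7 <= lg R n /\ lg R n ^+ 5 <= k_real R n i.
Proof.
case/andP=> i1 id.
have d1 : (1 : R) <= d_real R n.
  by rewrite -truncn_gt0; apply: leq_trans id.
have di : (i%:R : R) <= d_real R n.
  by rewrite -truncn_ge_nat //; lra.
have e2 := eR_ge2 R.
have [n1|n2] := leqP n 1.
  have : lg R n = 0.
    rewrite /lg; case: n n1 {id d1 di} => [|[|]] // _.
      by rewrite ln0 // mul0r.
    by rewrite ln1 mul0r.
  by move=> l0; move: d1; rewrite /d_real l0 (@ln0 R 0) // invr0 mulr0; lra.
have lg1 : 1 <= lg R n by have := @lg_ge_nat R n 1; rewrite expn1; apply.
have [lg_1|lg_gt1] := eqVneq (lg R n) 1.
  by move: d1; rewrite /d_real lg_1 ln1 invr0 mulr0; lra.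
have lgp : 1 < lg R n by rewrite lt_neqAle eq_sym lg_gt1.
move: lg1 lgp lg_gt1; have [la Hla] : {la | lg R n = la} by exists (lg R n).
rewrite Hla => lg1 lgp lg_gt1.
have lap : 0 < la by apply: lt_trans lgp.
have lnp : 0 < ln la by apply: ln_gt0.
set x := (n%:R / (8 * eR R * la ^+ 6)).
have hx : i%:R * ln la <= ln x.
  by move: di; rewrite /d_real Hla -/x ler_pdivlMr.
have lx : 0 < ln x by apply: lt_le_trans hx; rewrite mulr_gt0 // ltr0n.
have xp : 0 < x by rewrite ltNge; apply/negP => /ln0 h; move: lx; rewrite h ltxx.
have hx2 : la ^+ i <= x.
  by rewrite -ler_ln ?posrE ?exprn_gt0 // lnXn // -mulr_natl.
have Ap : 0 < 8 * eR R * la ^+ 6 by apply: mulr_gt0; [apply: mulr_gt0; lra | exact: exprn_gt0].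
have hn : 8 * eR R * la ^+ 6 * la ^+ i <= n%:R.
  by move: hx2; rewrite /x ler_pdivlMr // mulrC.
have hn7 : 16 * la ^+ 7 <= n%:R.
  apply: le_trans hn.
  have : la ^+ 1 <= la ^+ i by rewrite ler_weXn2l // ltW.
  rewrite expr1 => hi.
  have h7 : la ^+ 7 = la ^+ 6 * la by rewrite exprSr.
  have A0 : 0 <= la ^+ 6 by rewrite exprn_ge0 // ltW.
  have q1 : 0 <= (eR R - 2) * (la ^+ 6 * la ^+ i).
    by rewrite mulr_ge0 ?mulr_ge0 ?exprn_ge0 ?subr_ge0 // ltW.
  have q2 : 0 <= la ^+ 6 * (la ^+ i - la) by rewrite mulr_ge0 // subr_ge0.
  rewrite h7; lra.
have l1_7 : 1 <= la ^+ 7 by rewrite exprn_ege1.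
have n16 : (2 ^ 4 <= n)%N by rewrite -(ler_nat R); apply: le_trans hn7; rewrite natrX; lra.
have la4 : 4 <= la by have := @lg_ge_nat R n 4 n16; rewrite Hla.
have n128 : (2 ^ 7 <= n)%N.
  rewrite -(ler_nat R); apply: le_trans hn7; rewrite natrX.
  have : 4 ^+ 7 <= la ^+ 7 by rewrite lerXn2r // ?nnegrE; lra.
  lra.
split; first by have := @lg_ge_nat R n 7 n128; rewrite Hla.
rewrite /k_real Hla ler_pdivlMr ?mulr_gt0 ?exprn_gt0 //; last lra.
apply: le_trans hn; rewrite exprD expr1.
have -> : la ^+ 6 = la * la ^+ 5 by rewrite -exprS.
by rewrite le_eqVlt; apply/orP; left; apply/eqP; ring.
Qed.
Lemma eR_gt0 (R : realType) : 0 < eR R.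
Proof. by rewrite /eR expR_gt0. Qed.

Lemma k_nonneg (R : realType) n j : 1 <= lg R n -> 0 <= k_real R n j.
Proof.
move=> l1; rewrite /k_real divr_ge0 // mulr_ge0 ?exprn_ge0 //; last lra.
by rewrite mulr_ge0 // ltW // eR_gt0.
Qed.

Lemma l_nonneg (R : realType) n j : 1 <= lg R n -> 0 <= l_real R n j.
Proof.
move=> l1; rewrite /l_real mulr_ge0 ?k_nonneg // subr_ge0 invf_le1 //; lra.
Qed.

Lemma k_split (R : realType) n j : 1 <= lg R n ->
  k_real R n j.+1 + l_real R n j = k_real R n j.
Proof.
move=> l1; rewrite /l_real /k_real.
have l0 : lg R n != 0 by apply/eqP => h; move: l1; rewrite h; lra.
have e0 : eR R != 0 by rewrite gt_eqF // eR_gt0.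
rewrite addnS exprSr; field.
by rewrite e0 l0 expf_neq0.
Qed.

Lemma kN_split (R : realType) n j : 1 <= lg R n ->
  (kN R n j.+1 + lN R n j <= kN R n j)%N.
Proof.
move=> l1; rewrite /kN /lN truncn_ge_nat ?k_nonneg // natrD -(@k_split R n j l1).
by rewrite lerD // truncn_le ?k_nonneg ?l_nonneg.
Qed.

Lemma kN_mono (R : realType) n j j' : 1 <= lg R n -> (j <= j')%N ->
  (kN R n j' <= kN R n j)%N.
Proof.
move=> l1 jj; rewrite /kN; apply: le_truncn; rewrite /k_real.
have e0 := eR_gt0 R.
apply: ler_wpM2l => //; rewrite lef_pV2 ?posrE ?mulr_gt0 ?exprn_gt0 //; try lra.
apply: ler_wpM2l; first by rewrite mulr_ge0 //; lra.
by rewrite ler_weXn2l.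
Qed.

Lemma disj (R : realType) n i : 1 <= lg R n -> (1 <= i <= dN R n)%N ->
  forall r, in_epoch R n r i -> epoch_at R n r = Some i.
Proof.
move=> l1 /andP[i1 id] r ie; rewrite /epoch_at.
have e : dN R n = (i.-1 + (dN R n - i).+1)%N by lia.
rewrite e iotaD /= filter_cat.
have -> : (1 + i.-1 = i)%N by lia.
have -> : [seq j <- iota 1 i.-1 | in_epoch R n r j] = [::].
  apply/eqP; rewrite -[_ == _]negbK -has_filter; apply/hasPn => j.
  rewrite mem_iota => hj; apply/negP => je.
  move: ie je; rewrite /in_epoch => /and4P[_ _ _ ri] /and4P[_ _ rj _].
  have := @kN_split R n j l1; have := @kN_mono R n j.+1 i l1 ltac:(lia); lia.
by rewrite /= ie.
Qed.

Theorem mainTheorem15 (R : realType) (n : nat) (G : guesser R n)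
  (HG : is_guesser G) (i : nat) (Hi : (1 <= i <= dN R n)%N) :
  expected_correct_in_epoch G i <= ln (lg R n + 3).
Proof.
have [l7 k5] := @params R n i Hi.
have l1 : 1 <= lg R n by lra.
have [A B] := @arith R _ _ l7 k5.
have k0 := @k_nonneg R n i l1.
have lnn := @l_nonneg R n i l1.
have u0 : 0 <= u_real R n i.
  by apply: divr_ge0; [apply: mulr_ge0 => //; lra | apply: exprn_ge0; lra].
have Kle : (kN R n i)%:R <= k_real R n i by rewrite truncn_le.
have Kgt : k_real R n i < (kN R n i).+1%:R by apply: truncnS_gt.
have Lle : (lN R n i)%:R <= l_real R n i by rewrite truncn_le.
have Ule : (uN R n i)%:R <= u_real R n i by rewrite truncn_le.
have HKLU : (uN R n i < kN R n i - lN R n i)%N.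
  suff : (uN R n i + lN R n i + 1 <= kN R n i)%N by lia.
  rewrite /kN truncn_ge_nat // !natrD.
  rewrite /u_real /l_real in A Ule Lle *; lra.
rewrite /expected_correct_in_epoch.
apply: le_trans.
  apply: (@play_bound R n G HG i Hi (@disj R n i l1 Hi) HKLU).
  by rewrite cards0.
apply: le_trans (@Phi0_le R _ _ _ _ HKLU) _.
have p1 : (0 : R) < (kN R n i - lN R n i - uN R n i)%:R by rewrite ltr0n subn_gt0.
rewrite lerBlDr -lnM ?posrE //; last lra.
have q1 : (0 : R) < lg R n + 3 by clear -l1; lra.
have q2 : (0 : R) < (kN R n i - uN R n i)%:R by rewrite ltr0n; clear -HKLU; lia.
rewrite ler_ln ?posrE ?mulr_gt0 //.
have hK : (uN R n i <= kN R n i)%N by clear -HKLU; lia.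
have hL : (lN R n i <= kN R n i)%N by clear -HKLU; lia.
have hU : (uN R n i <= kN R n i - lN R n i)%N by clear -HKLU; lia.
rewrite !natrB //.
rewrite -addn1 natrD in Kgt.
move: Kle Kgt Lle Ule B q1.
rewrite /u_real /l_real.
move: (k_real R n i) (lg R n) ((kN R n i)%:R) ((lN R n i)%:R) ((uN R n i)%:R) (ler0n R (uN R n i)).
clear.
move=> k la K L U U0 Kle Kgt Lle Ule B q1.
set l := k * (1 - la^-1) in Lle Ule B *.
set u := 2 * l / la ^+ 2 in Ule B *.
clearbody l u.
have h : 0 <= (la + 3) * ((K - L - U) - (k - 1 - l - u)) by rewrite mulr_ge0 //; lra.
lra.
Qed.
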